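(* Let $G$ be a non-regular simple graph on $n$ vertices such that $F_k(G)$ is regular for some integer $k$ with $2\le k\le n-2$. Then $G$ is isomorphic to the star $K_{1,n-1}$ or to its complement $\overline{K_{1,n-1}}$, and in both cases $k=n/2$.
   Context: For a simple graph $G=(V,E)$ on $n$ vertices and an integer $1\le k<n$, the $k$-token graph $F_k(G)$ is the graph whose vertices are all $k$-element subsets of $V$, two such subsets $A,B$ being adjacent whenever their symmetric difference $A\triangle B$ is a pair $\{a,b\}$ with $a$ adjacent to $b$ in $G$. *)

(* Defs.v *)
From mathcomp Require Import all_boot.
Set Implicit Arguments. Unset Strict Implicit. Unset Printing Implicit Defensive.

Definition simple_graph (n : nat) (e : rel 'I_n) : Prop :=
  (forall u v, e u v = e v u) /\ (forall u, ~~ e u u).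

Definition regular (T : finType) (e : rel T) : Prop :=
  exists d : nat, forall v : T, #|[set w | e v w]| = d.

Definition symdiff (T : finType) (A B : {set T}) : {set T} :=
  (A :\: B) :|: (B :\: A).

Definition token_adj (T : finType) (e : rel T) (A B : {set T}) : bool :=
  [exists a : T, exists b : T, e a b && (symdiff A B == [set a; b])].

Definition token_graph_regular (T : finType) (e : rel T) (k : nat) : Prop :=
  exists d : nat, forall A : {set T}, #|A| = k ->
    #|[set B : {set T} | (#|B| == k) && token_adj e A B]| = d.

Definition star_rel (n : nat) : rel 'I_n :=
  fun u v => (u != v) && ((val u == 0) || (val v == 0)).
Definition costar_rel (n : nat) : rel 'I_n :=
  fun u v => (u != v) && ~~ star_rel u v.

Definition isomorphic (n : nat) (e e' : rel 'I_n) : Prop :=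
  exists f : 'I_n -> 'I_n, bijective f /\ forall u v, e u v = e' (f u) (f v).

(* Main.v *)
Require Import Defs.
From mathcomp Require Import all_boot zify.
From mathcomp Require Import perm.
Set Implicit Arguments. Unset Strict Implicit. Unset Printing Implicit Defensive.

Definition nbr (T : finType) (e : rel T) (c : T) : {set T} := [set b | e c b].
Definition cut (T : finType) (e : rel T) (A : {set T}) : nat :=
  \sum_(c in A) #|[set b | e c b & b \notin A]|.

Lemma sum_indic (T : finType) (X : {set T}) (P : pred T) :
  \sum_(c in X) (P c : nat) = #|X :&: [set c | P c]|.
Proof.
rewrite -sum1_card [RHS]big_mkcond [LHS]big_mkcond /=.
apply: eq_bigr => i _; rewrite !inE; by case: (i \in X); case: (P i).
Qed.

Lemma cut_add (T : finType) (e : rel T) (hsym : forall u v, e u v = e v u)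
  (hirr : forall u, ~~ e u u) (a : T) (X : {set T}) :
  a \notin X -> cut e (a |: X) + 2 * #|nbr e a :&: X| = cut e X + #|nbr e a|.
Proof.
move=> aX.
rewrite /cut big_setU1 //=.
have E1 : [set b | e a b & b \notin a |: X] = nbr e a :\: X.
  apply/setP => z; rewrite !inE.
  case: (z =P a) => [->|_].
  - by rewrite (negbTE (hirr a)) andbF.
  - by rewrite /= andbC.
have E2 : forall c, c \in X -> #|[set b | e c b & b \notin X]| =
     (e c a : nat) + #|[set b | e c b & b \notin a |: X]|.
  move=> c cX; rewrite (cardsD1 a) !inE aX andbT; congr (_ + _).
  apply: eq_card => z; rewrite !inE; by case: (z == a); case: (e c z).
rewrite (eq_bigr _ E2) big_split /= sum_indic E1.
have -> : X :&: [set c | e c a] = nbr e a :&: X.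
  apply/setP => z; rewrite !inE hsym; by rewrite andbC.
have := cardsID X (nbr e a). lia.
Qed.

Lemma symdiff_card (T : finType) (A B : {set T}) : #|A| = #|B| ->
  #|symdiff A B :&: A| = #|symdiff A B :\: A|.
Proof.
move=> hAB.
have -> : symdiff A B :&: A = A :\: B.
  apply/setP => z; rewrite !inE; by case: (z \in A); case: (z \in B).
have -> : symdiff A B :\: A = B :\: A.
  apply/setP => z; rewrite !inE; by case: (z \in A); case: (z \in B).
have := cardsID B A; have := cardsID A B; rewrite setIC. lia.
Qed.

Lemma sd_L1 (T : finType) (A B : {set T}) a b : a != b ->
  symdiff A B = [set a; b] -> #|A| = #|B| -> a \in A -> b \notin A.
Proof.
move=> ab hS hAB aA; apply/negP => bA.
have := symdiff_card hAB; rewrite hS.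
have -> : [set a; b] :&: A = [set a; b].
  apply/setP => z; rewrite !inE; case: (z =P a) => [->|_]; rewrite ?aA //.
  case: (z =P b) => [->|_]; by rewrite ?bA ?andbF ?andbT.
have -> : [set a; b] :\: A = set0.
  apply/setP => z; rewrite !inE; case: (z =P a) => [->|_]; rewrite ?aA //.
  case: (z =P b) => [->|_]; by rewrite ?bA ?andbF ?andbT.
by rewrite cards2 ab cards0.
Qed.

Lemma sd_L2 (T : finType) (A B : {set T}) a b : a != b ->
  symdiff A B = [set a; b] -> #|A| = #|B| -> a \notin A -> b \in A.
Proof.
move=> ab hS hAB aA; apply/negPn/negP => bA.
have := symdiff_card hAB; rewrite hS.
have -> : [set a; b] :\: A = [set a; b].
  apply/setP => z; rewrite !inE; case: (z =P a) => [->|_]; rewrite ?aA //.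
  case: (z =P b) => [->|_]; by rewrite ?bA ?andbF ?andbT.
have -> : [set a; b] :&: A = set0.
  apply/setP => z; rewrite !inE; case: (z =P a) => [->|_]; rewrite ?(negbTE aA) //.
  case: (z =P b) => [->|_]; by rewrite ?(negbTE bA) ?andbF ?andbT.
by rewrite cards2 ab cards0.
Qed.

Lemma sd_B (T : finType) (A B : {set T}) a b : a != b ->
  symdiff A B = [set a; b] -> a \in A -> b \notin A -> B = b |: (A :\ a).
Proof.
move=> ab hS aA bA; apply/setP => z.
have := congr1 (fun S : {set T} => z \in S) hS; rewrite /= !inE.
case: (z =P a) => [->|za]; rewrite ?aA.
  rewrite (negbTE ab) /= orbF andbT; by case: (a \in B).
case: (z =P b) => [->|zb]; rewrite ?(negbTE bA) /=; first by case: (b \in B).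
by case: (z \in A); case: (z \in B).
Qed.

Lemma tdeg_cut (T : finType) (e : rel T) (hsym : forall u v, e u v = e v u)
  (hirr : forall u, ~~ e u u) (A : {set T}) :
  #|[set B : {set T} | (#|B| == #|A|) && token_adj e A B]| = cut e A.
Proof.
pose P := [set p : T * T | [&& p.1 \in A, p.2 \notin A & e p.1 p.2]].
pose phi := fun p : T * T => p.2 |: (A :\ p.1).
have -> : [set B : {set T} | (#|B| == #|A|) && token_adj e A B] = phi @: P.
  apply/setP => B; rewrite inE; apply/idP/idP.
  - case/andP => /eqP hB /existsP [a /existsP [b /andP [eab /eqP hS]]].
    have ab : a != b by apply: contraTneq eab => ->; exact: hirr.
    case aA: (a \in A).
    + have bA := sd_L1 ab hS (esym hB) aA.
      apply/imsetP; exists (a, b); first by rewrite inE /= aA bA eab.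
      exact: sd_B ab hS aA bA.
    + have bA := sd_L2 ab hS (esym hB) (negbT aA).
      have hS' : symdiff A B = [set b; a] by rewrite hS setUC.
      apply/imsetP; exists (b, a); first by rewrite inE /= aA bA hsym eab.
      by apply: (sd_B _ hS' bA (negbT aA)); rewrite eq_sym.
  - case/imsetP => [[c b]]; rewrite inE /= => /and3P [cA bA ecb] ->.
    have cb : c != b by apply: contraNneq bA => <-.
    apply/andP; split.
      by rewrite /phi /= cardsU1 !inE negb_and bA orbT (cardsD1 c A) cA.
    apply/existsP; exists c; apply/existsP; exists b; rewrite ecb /=.
    apply/eqP/setP => z; rewrite /phi /symdiff !inE /=.
    case: (z =P c) => [->|zc] /=; first by rewrite cA (negbTE cb).
    case: (z =P b) => [->|zb]; first by rewrite (negbTE bA).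
    by case: (z \in A).
rewrite card_in_imset; last first.
  move=> [c b] [c' b']; rewrite !inE /= => /and3P [cA bA _] /and3P [cA' bA' _].
  rewrite /phi /= => h.
  have hb : b \in b' |: (A :\ c') by rewrite -h setU11.
  have hc : c \notin b' |: (A :\ c') by rewrite -h !inE eqxx /= orbF; apply: contraNneq bA => <-.
  move: hb hc; rewrite !inE (negbTE bA) andbF orbF => /eqP -> .
  rewrite cA andbT negb_or => /andP [_]; rewrite negbK => /eqP -> //.
transitivity (\sum_(c : T) \sum_(b : T) ((c \in A) && (b \notin A) && e c b : nat)).
  rewrite pair_big /= -sum1_card big_mkcond; apply: eq_bigr => [[c b]] _.
  rewrite inE /= andbA; by case: (_ && _ && _).
rewrite /cut [RHS]big_mkcond; apply: eq_bigr => c _.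
case: (c \in A) => /=.
  rewrite -sum1_card [RHS]big_mkcond; apply: eq_bigr => b _; rewrite inE andbC.
  by case: (_ && _).
by rewrite big1.
Qed.

Lemma exists_subset (T : finType) (C : {set T}) m : m <= #|C| ->
  exists S : {set T}, S \subset C /\ #|S| = m.
Proof.
elim: m => [|m IH] hm; first by exists set0; rewrite sub0set cards0.
have [S [SC cS]] := IH (ltnW hm).
have : 0 < #|C :\: S|.
  have := cardsID S C. have : #|C :&: S| <= #|S| by apply: subset_leq_card; exact: subsetIr.
  lia.
case/card_gt0P => z; rewrite inE => /andP [zS zC].
exists (z |: S); split; first by rewrite subUset sub1set zC SC.
by rewrite cardsU1 zS cS.
Qed.

Lemma cap_add (T : finType) (e : rel T) p q (S : {set T}) : q \notin S ->
  #|nbr e p :&: (q |: S)| = e p q + #|nbr e p :&: S|.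
Proof.
move=> qS; rewrite (cardsD1 q) !inE eqxx /= andbT; congr (_ + _).
apply: eq_card => z; rewrite !inE; case: (z =P q) => [->|] //=.
by rewrite (negbTE qS) andbF.
Qed.

Lemma quad (T : finType) (e : rel T) (hsym : forall u v, e u v = e v u)
  (hirr : forall u, ~~ e u u) k d :
  2 <= k -> k + 2 <= #|T| -> (forall A : {set T}, #|A| = k -> cut e A = d) ->
  forall x y s t : T, x != y -> s != t -> x != s -> x != t -> y != s -> y != t ->
  e s x + e t y = e s y + e t x.
Proof.
move=> k2 kn hreg x y s t xy st xs xt ys yt.
pose D := x |: (y |: (s |: [set t])).
have hD : #|D| <= 4.
  by rewrite /D !cardsU1 cards1 -[4]/(1+(1+(1+1))) !leq_add ?leq_b1.
have := cardsC D.
have [S [SD cS]] : exists S : {set T}, S \subset ~: D /\ #|S| = k - 2.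
  apply: exists_subset; have := cardsC D; move: hD kn k2; move: (#|D|) (#|~: D|) (#|T|) => a b c; lia.
move=> _.
have nin : forall z, z \in D -> z \notin S.
  move=> z zD; apply/negP => zS; have := subsetP SD z zS; by rewrite inE zD.
have xS : x \notin S by apply: nin; rewrite !inE eqxx.
have yS : y \notin S by apply: nin; rewrite !inE eqxx !orbT.
have sS : s \notin S by apply: nin; rewrite !inE eqxx !orbT.
have tS : t \notin S by apply: nin; rewrite !inE eqxx !orbT.
have key : forall p q, p != q -> p \notin S -> q \notin S ->
    d + 2 * (e p q + #|nbr e p :&: S|) = cut e (q |: S) + #|nbr e p|.
  move=> p q pq pS qS.
  have pX : p \notin q |: S by rewrite !inE negb_or pq pS.
  rewrite -(cap_add e p qS) -(cut_add hsym hirr pX) hreg //.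
  rewrite !cardsU1 pX qS cS /=; move: k2; clear; lia.
have sx : s != x by rewrite eq_sym.
have sy : s != y by rewrite eq_sym.
have tx : t != x by rewrite eq_sym.
have ty : t != y by rewrite eq_sym.
have h1 := key s x sx sS xS.
have h2 := key s y sy sS yS.
have h3 := key t x tx tS xS.
have h4 := key t y ty tS yS.
move: h1 h2 h3 h4.
move: (cut e (x |: S)) (cut e (y |: S)) #|nbr e s :&: S| #|nbr e t :&: S| #|nbr e s| #|nbr e t|.
move: (e s x) (e s y) (e t x) (e t y) => a1 a2 a3 a4 b1 b2 b3 b4 b5 b6.
clear; lia.
Qed.

Lemma classify (T : finType) (e : rel T) (hsym : forall u v, e u v = e v u)
  (hirr : forall u, ~~ e u u)
  (hq : forall x y s t : T, x != y -> s != t -> x != s -> x != t -> y != s -> y != t ->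
      e s x + e t y = e s y + e t x)
  u v w : u != v -> u != w -> v != w -> e u v -> ~~ e u w ->
  exists c, (forall a b, e a b = (a != b) && ((a == c) || (b == c))) \/
            (forall a b, e a b = (a != b) && ~~ ((a == c) || (b == c))).
Proof.
move=> uv uw vw euv euw.
have H12 : forall s, s != v -> s != w -> e v s && ~~ e w s.
  move=> s sv sw; case: (s =P u) => [->|su]; first by rewrite hsym euv hsym euw.
  have := hq u s v w (introN eqP (fun h => su (esym h))) vw uv uw sv sw.
  rewrite hsym euv (hsym w u) (negbTE euw).
  by case: (e v s); case: (e w s).
have H1 : forall s, s != v -> s != w -> e v s by move=> s sv sw; case/andP: (H12 s sv sw).
have H2 : forall s, s != v -> s != w -> e w s = false
  by move=> s sv sw; case/andP: (H12 s sv sw) => _ /negbTE.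
have H3 : forall s t, s != t -> s != v -> s != w -> t != v -> t != w -> e s t = ~~ e v w.
  move=> s t st sv sw tv tw.
  have vs : v != s by rewrite eq_sym.
  have wv : w != v by rewrite eq_sym.
  have ws : w != s by rewrite eq_sym.
  have ts : t != s by rewrite eq_sym.
  have := hq t w v s tw vs tv ts wv ws.
  rewrite (H1 t tv tw) (hsym s w) (H2 s sv sw).
  by case: (e v w); case: (e s t).
case evw: (e v w).
- exists v; left => a b.
  case: (a =P v) => [->|/eqP av].
    rewrite /= andbT.
    case: (b =P v) => [->|/eqP bv]; first by rewrite ?eqxx (negbTE (hirr v)).
    rewrite eq_sym bv; case: (b =P w) => [->|/eqP bw]; first by rewrite evw.
    by rewrite H1.
  case: (b =P v) => [->|/eqP bv].
    rewrite ?eqxx orbT andbT av hsym; case: (a =P w) => [->|/eqP aw]; first by rewrite evw.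
    by rewrite H1.
  rewrite /= andbF.
  case: (a =P b) => [->|/eqP ab]; first by rewrite (negbTE (hirr b)).
  case: (a =P w) => [aw0|/eqP aw]; first by subst a; rewrite H2 // eq_sym.
  case: (b =P w) => [->|/eqP bw]; first by rewrite hsym H2.
  by rewrite H3 ?evw.
- exists w; right => a b.
  case: (a =P w) => [->|/eqP aw].
    rewrite ?eqxx /= andbF; case: (b =P w) => [->|/eqP bw]; first by rewrite (negbTE (hirr w)).
    case: (b =P v) => [->|/eqP bv]; first by rewrite hsym evw.
    by rewrite H2.
  case: (b =P w) => [->|/eqP bw].
    rewrite ?eqxx orbT andbF hsym; case: (a =P v) => [->|/eqP av]; first by rewrite hsym evw.
    by rewrite H2.
  rewrite /= andbT.
  case: (a =P b) => [->|/eqP ab]; first by rewrite (negbTE (hirr b)) ?eqxx.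
  case: (a =P v) => [av0|/eqP av]; first by subst a; rewrite H1 // eq_sym.
  case: (b =P v) => [->|/eqP bv]; first by rewrite hsym H1.
  by rewrite H3 ?evw.
Qed.

Lemma deg_eq (T : finType) (e : rel T) (hsym : forall u v, e u v = e v u)
  (hirr : forall u, ~~ e u u) p q : p != q ->
  (forall r, r != p -> r != q -> e p r = e q r) -> #|nbr e p| = #|nbr e q|.
Proof.
move=> pq h; rewrite (cardsD1 q) (cardsD1 p (nbr e q)) !inE hsym; congr (_ + _).
apply: eq_card => z; rewrite !inE.
case: (z =P p) => [->|/eqP zp]; first by rewrite (negbTE (hirr p)) pq.
case: (z =P q) => [->|/eqP zq]; first by rewrite (negbTE (hirr q)).
by rewrite h.
Qed.

Lemma val0E n (z0 : 'I_n) (x : 'I_n) : val z0 = 0 -> (val x == 0) = (x == z0).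
Proof. by move=> h; rewrite -val_eqE h. Qed.

Lemma star_iso n (e : rel 'I_n) c (z0 : 'I_n) : val z0 = 0 ->
  (forall a b, e a b = (a != b) && ((a == c) || (b == c))) -> isomorphic e (@star_rel n).
Proof.
move=> h0 he; exists (tperm c z0); split; first exact: inv_bij (tpermK c z0).
have E : forall x, (tperm c z0 x == z0) = (x == c).
  move=> x; apply/eqP/eqP => [h|->]; last exact: tpermL.
  by apply: (@perm_inj _ (tperm c z0)); rewrite h tpermL.
by move=> a b; rewrite he /star_rel !(val0E _ h0) !E (inj_eq perm_inj).
Qed.

Lemma costar_iso n (e : rel 'I_n) c (z0 : 'I_n) : val z0 = 0 ->
  (forall a b, e a b = (a != b) && ~~ ((a == c) || (b == c))) -> isomorphic e (@costar_rel n).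
Proof.
move=> h0 he; exists (tperm c z0); split; first exact: inv_bij (tpermK c z0).
have E : forall x, (tperm c z0 x == z0) = (x == c).
  move=> x; apply/eqP/eqP => [h|->]; last exact: tpermL.
  by apply: (@perm_inj _ (tperm c z0)); rewrite h tpermL.
move=> a b; rewrite he /costar_rel /star_rel !(val0E _ h0) !E (inj_eq perm_inj).
by case: (a == b).
Qed.

Theorem theorem4 (n : nat) (e : rel 'I_n) (k : nat) :
  simple_graph e ->
  ~ regular e ->
  2 <= k <= n - 2 ->
  token_graph_regular e k ->
  (isomorphic e (@star_rel n) \/ isomorphic e (@costar_rel n)) /\ k.*2 = n.
Proof.
move=> [hsym hirr] nreg /andP [k2 kn] [d hd].
have n4 : 4 <= n by lia.
have hreg : forall A : {set 'I_n}, #|A| = k -> cut e A = d.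
  move=> A hA; rewrite -(tdeg_cut hsym hirr A) hA; exact: hd.
have hq := quad hsym hirr k2 (_ : k + 2 <= #|'I_n|) hreg.
have hq' := hq ltac:(rewrite card_ord; lia).
have n0 : 0 < n by lia.
have n1 : 1 < n by lia.
pose z0 : 'I_n := Ordinal n0.
pose z1 : 'I_n := Ordinal n1.
have [p [q dpq]] : exists p q, #|nbr e p| != #|nbr e q|.
  case: (boolP [exists q, #|nbr e q| != #|nbr e z0|]).
    by case/existsP => q h; exists q, z0.
  rewrite negb_exists => /forallP h; exfalso; apply: nreg.
  exists #|nbr e z0| => v; have := h v; rewrite negbK => /eqP <-.
  by [].
have pq : p != q by apply: contraNneq dpq => ->.
have [r [rp [rq epr]]] : exists r, r != p /\ r != q /\ e p r != e q r.
  case: (boolP [exists r, [&& r != p, r != q & e p r != e q r]]).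
    by case/existsP => r /and3P [? ? ?]; exists r.
  rewrite negb_exists => /forallP h; exfalso; move/eqP: dpq; apply.
  apply: deg_eq => // s sp sq; apply/eqP; have := h s; by rewrite sp sq /= negbK.
have [u [v [w [uv uw vw euv euw]]]] :
    exists u v w, [/\ u != v, u != w, v != w, e u v & ~~ e u w].
  case epr': (e p r); move: epr; rewrite epr' => eqr.
  - exists r, p, q; rewrite rp rq pq hsym epr' (hsym r q).
    by move: eqr; case: (e q r).
  - exists r, q, p; rewrite rp rq eq_sym pq (hsym r q) (hsym r p) epr'.
    by move: eqr; case: (e q r).
have [c hc] := classify hsym hirr hq' uv uw vw euv euw.
have [b bc] : exists b : 'I_n, b != c.
  case: (c =P z0) => [->|h]; first by exists z1.
  by exists z0; apply/eqP => h'; apply: h; rewrite h'.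
have [X [XS cX]] : exists X : {set 'I_n}, X \subset ~: [set c; b] /\ #|X| = k - 1.
  apply: exists_subset; have := cardsC [set c; b]; rewrite cards2 eq_sym bc card_ord.
  rewrite /=; move: kn k2; move: (#|~: [set c; b]|) => m; clear; lia.
have cXn : c \notin X by apply/negP => /(subsetP XS); rewrite !inE eqxx.
have bXn : b \notin X by apply/negP => /(subsetP XS); rewrite !inE eqxx orbT.
have Xc : forall z, z \in X -> z != c by move=> z /(subsetP XS); rewrite !inE negb_or => /andP [].
have Xb : forall z, z \in X -> z != b by move=> z /(subsetP XS); rewrite !inE negb_or => /andP [].
have hcc := cut_add hsym hirr cXn.
have hbb := cut_add hsym hirr bXn.
rewrite (hreg (c |: X)) in hcc; last by rewrite cardsU1 cXn cX /=; move: k2; clear; lia.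
rewrite (hreg (b |: X)) in hbb; last by rewrite cardsU1 bXn cX /=; move: k2; clear; lia.
case: hc => he.
- have c1 : #|nbr e c| = n - 1.
    have -> : n - 1 = #|[set~ c]| by rewrite cardsC1 card_ord subn1.
    apply: eq_card => z; rewrite !inE he eqxx orTb andbT.
    by rewrite eq_sym.
  have c2 : #|nbr e c :&: X| = k - 1.
    rewrite -cX; apply: eq_card => z; rewrite !inE he eqxx /= andbT.
    case zX: (z \in X); last by rewrite andbF.
    by rewrite andbT eq_sym Xc.
  have c3 : #|nbr e b| = 1.
    rewrite -(cards1 c); apply: eq_card => z; rewrite !inE he (negbTE bc) /=.
    case: (z =P c) => [->|] //=; first by rewrite andbT.
    by rewrite andbF.
  have c4 : #|nbr e b :&: X| = 0.
    rewrite -(cards0 'I_n); apply: eq_card => z; rewrite !inE he (negbTE bc) /=.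
    case zX: (z \in X); last by rewrite andbF.
    by rewrite (negbTE (Xc z zX)) andbF.
  split; first by left; exact: (@star_iso n e c z0 erefl he).
  rewrite c1 c2 in hcc; rewrite c3 c4 in hbb.
  rewrite -addnn; move: hcc hbb k2 kn; move: (cut e X) => C; clear; lia.
- have c1 : #|nbr e c| = 0.
    rewrite -(cards0 'I_n); apply: eq_card => z; rewrite !inE he eqxx /=.
    by rewrite andbF.
  have c2 : #|nbr e c :&: X| = 0.
    rewrite -(cards0 'I_n); apply: eq_card => z; rewrite !inE he eqxx /=.
    by rewrite andbF.
  have c3 : #|nbr e b| = n - 2.
    have := cardsD1 c [set~ b]; rewrite cardsC1 card_ord !inE (eq_sym c b) bc /=.
    set m := #|[set~ b] :\ c| => h.
    have -> : n - 2 = m by move: h; clearbody m; clear; lia.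
    rewrite /m; apply: eq_card => z; rewrite !inE he (negbTE bc) /=.
    by rewrite eq_sym andbC.
  have c4 : #|nbr e b :&: X| = k - 1.
    rewrite -cX; apply: eq_card => z; rewrite !inE he (negbTE bc) /=.
    case zX: (z \in X); last by rewrite andbF.
    by rewrite andbT eq_sym Xb // Xc.
  split; first by right; exact: (@costar_iso n e c z0 erefl he).
  rewrite c1 c2 in hcc; rewrite c3 c4 in hbb.
  rewrite -addnn; move: hcc hbb k2 kn; move: (cut e X) => C; clear; lia.
Qed.
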